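(* (Σ-completeness of $\mathsf{WSeq}$.) For every $\Sigma$-sentence $\phi$ of $\mathcal{L}$, if $\mathfrak{S}\models\phi$ then $\mathsf{WSeq}\vdash\phi$.
   Context: $\mathcal{L}$ is the first-order language $\{e, \vdash, \circ\}$ with $e$ a constant symbol and $\vdash$ (written infix), $\circ$ binary function symbols. Sequences: $()$ is a sequence, and for $n>0$, if $s_1,\ldots,s_n$ are sequences then $(s_1,\ldots,s_n)$ is a sequence. The standard structure $\mathfrak{S}$ has universe all sequences, $e^{\mathfrak{S}}=()$, $(s_1,\ldots,s_n)\vdash^{\mathfrak{S}} t=(s_1,\ldots,s_n,t)$, and $\circ^{\mathfrak{S}}$ is concatenation of sequences. The sequeral $\overline{s}$ of a sequence is the term with $\overline{()}=e$ and $\overline{(s_1,\ldots,s_n)}=(\ldots((e\vdash\overline{s_1})\vdash\overline{s_2})\ldots)\vdash\overline{s_n}$. For terms $t_1,t_2$, $t_1\sqsubseteq t_2$ abbreviates $\exists y[t_1\circ y=t_2]$, $t_1\not\sqsubseteq t_2$ abbreviates its negation, and $\forall x\sqsubseteq t[\phi]$ abbreviates $\forall x[x\sqsubseteq t\rightarrow\phi]$. The $\Sigma$-formulas are defined inductively: atomic formulas and negations of atomic formulas; $s\sqsubseteq t$ and $s\not\sqsubseteq t$ for terms $s,t$; $\alpha\wedge\beta$ and $\alpha\vee\beta$ for $\Sigma$-formulas $\alpha,\beta$; $\exists x[\phi]$ for a $\Sigma$-formula $\phi$; and $\forall x\sqsubseteq t[\phi]$ for a $\Sigma$-formula $\phi$,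 variable $x$ and term $t$ not containing $x$. The theory $\mathsf{WSeq}$ has the axiom schemes: ($\mathsf{WSeq}_1$) $\overline{s}\neq\overline{t}$ for all distinct sequences $s,t$; ($\mathsf{WSeq}_2$) $\overline{(s_1,\ldots,s_n)}\circ\overline{(t_1,\ldots,t_m)}=\overline{(s_1,\ldots,s_n,t_1,\ldots,t_m)}$ for all sequences; ($\mathsf{WSeq}_3$) $\forall x[x\sqsubseteq\overline{s}\rightarrow\bigvee_{t\in I(s)}x=\overline{t}]$ for every sequence $s$, where $I(s)$ is the set of all initial segments of $s$ (including $()$ and $s$). *)

(* Defs.v *)
From Stdlib Require Import List Arith.
Import ListNotations.

Inductive sq : Type := mk : list sq -> sq.

Definition sq_nil : sq := mk [].
Definition sq_snoc (s t : sq) : sq := match s with mk l => mk (l ++ [t]) end.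
Definition sq_cat (s t : sq) : sq :=
  match s, t with mk l1, mk l2 => mk (l1 ++ l2) end.

Inductive term : Type :=
| Tvar : nat -> term
| Te : term
| Tsnoc : term -> term -> term   (* t1 |- t2 *)
| Tcat : term -> term -> term.   (* t1 o t2 *)

Inductive form : Type :=
| Eq : term -> term -> form
| Bot : form
| Imp : form -> form -> form
| And : form -> form -> form
| Or : form -> form -> form
| All : form -> form
| Ex : form -> form.

Definition Neg (p : form) : form := Imp p Bot.

Fixpoint tsubst (s : nat -> term) (t : term) : term :=
  match t with
  | Tvar n => s n
  | Te => Te
  | Tsnoc a b => Tsnoc (tsubst s a) (tsubst s b)
  | Tcat a b => Tcat (tsubst s a) (tsubst s b)
  end.

Definition tlift (t : term) : term := tsubst (fun k => Tvar (S k)) t.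

Definition up (s : nat -> term) : nat -> term :=
  fun n => match n with 0 => Tvar 0 | S k => tlift (s k) end.

Fixpoint fsubst (s : nat -> term) (p : form) : form :=
  match p with
  | Eq a b => Eq (tsubst s a) (tsubst s b)
  | Bot => Bot
  | Imp a b => Imp (fsubst s a) (fsubst s b)
  | And a b => And (fsubst s a) (fsubst s b)
  | Or a b => Or (fsubst s a) (fsubst s b)
  | All a => All (fsubst (up s) a)
  | Ex a => Ex (fsubst (up s) a)
  end.

Definition flift (p : form) : form := fsubst (fun k => Tvar (S k)) p.

Definition scons {A : Type} (x : A) (f : nat -> A) : nat -> A :=
  fun n => match n with 0 => x | S k => f k end.

Definition inst (p : form) (t : term) : form := fsubst (scons t Tvar) p.

Fixpoint tclosed (n : nat) (t : term) : Prop :=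
  match t with
  | Tvar k => k < n
  | Te => True
  | Tsnoc a b | Tcat a b => tclosed n a /\ tclosed n b
  end.

Fixpoint fclosed (n : nat) (p : form) : Prop :=
  match p with
  | Eq a b => tclosed n a /\ tclosed n b
  | Bot => True
  | Imp a b | And a b | Or a b => fclosed n a /\ fclosed n b
  | All a | Ex a => fclosed (S n) a
  end.

Definition sentence (p : form) : Prop := fclosed 0 p.

Definition Sub (t1 t2 : term) : form :=
  Ex (Eq (Tcat (tlift t1) (Tvar 0)) (tlift t2)).
(* forall x ⊑ t [p]  :=  forall x [x ⊑ t -> p]   (x = Tvar 0, t does not mention x) *)
Definition BAll (t : term) (p : form) : form :=
  All (Imp (Sub (Tvar 0) (tlift t)) p).

Inductive Sigma : form -> Prop :=
| S_eq : forall s t, Sigma (Eq s t)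
| S_neq : forall s t, Sigma (Neg (Eq s t))
| S_sub : forall s t, Sigma (Sub s t)
| S_nsub : forall s t, Sigma (Neg (Sub s t))
| S_and : forall a b, Sigma a -> Sigma b -> Sigma (And a b)
| S_or : forall a b, Sigma a -> Sigma b -> Sigma (Or a b)
| S_ex : forall a, Sigma a -> Sigma (Ex a)
| S_ball : forall t a, Sigma a -> Sigma (BAll t a).

Fixpoint teval (rho : nat -> sq) (t : term) : sq :=
  match t with
  | Tvar n => rho n
  | Te => sq_nil
  | Tsnoc a b => sq_snoc (teval rho a) (teval rho b)
  | Tcat a b => sq_cat (teval rho a) (teval rho b)
  end.

Fixpoint sat (rho : nat -> sq) (p : form) : Prop :=
  match p with
  | Eq a b => teval rho a = teval rho b
  | Bot => False
  | Imp a b => sat rho a -> sat rho b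
  | And a b => sat rho a /\ sat rho b
  | Or a b => sat rho a \/ sat rho b
  | All a => forall d : sq, sat (scons d rho) a
  | Ex a => exists d : sq, sat (scons d rho) a
  end.

Definition models_S (p : form) : Prop := forall rho, sat rho p.

Fixpoint seqr (s : sq) : term :=
  match s with
  | mk l =>
      (fix go (acc : term) (l : list sq) : term :=
         match l with
         | [] => acc
         | x :: r => go (Tsnoc acc (seqr x)) r
         end) Te l
  end.

Fixpoint bigOr (l : list form) : form :=
  match l with
  | [] => Bot
  | [x] => x
  | x :: r => Or x (bigOr r)
  end.

Definition inits {A : Type} (l : list A) : list (list A) :=
  map (fun k => firstn k l) (seq 0 (S (length l))).

Inductive WSeq_ax : form -> Prop :=
| WSeq1 : forall s t, s <> t -> WSeq_ax (Neg (Eq (seqr s) (seqr t)))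
| WSeq2 : forall l1 l2,
    WSeq_ax (Eq (Tcat (seqr (mk l1)) (seqr (mk l2))) (seqr (mk (l1 ++ l2))))
| WSeq3 : forall l,
    WSeq_ax (All (Imp (Sub (Tvar 0) (tlift (seqr (mk l))))
                      (bigOr (map (fun i => Eq (Tvar 0) (tlift (seqr (mk i))))
                                  (inits l))))).

Inductive nd : list form -> form -> Prop :=
| nd_ax : forall G p, In p G -> nd G p
| nd_raa : forall G p, nd (Neg p :: G) Bot -> nd G p
| nd_impI : forall G p q, nd (p :: G) q -> nd G (Imp p q)
| nd_impE : forall G p q, nd G (Imp p q) -> nd G p -> nd G q
| nd_andI : forall G p q, nd G p -> nd G q -> nd G (And p q)
| nd_andE1 : forall G p q, nd G (And p q) -> nd G p
| nd_andE2 : forall G p q, nd G (And p q) -> nd G q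
| nd_orI1 : forall G p q, nd G p -> nd G (Or p q)
| nd_orI2 : forall G p q, nd G q -> nd G (Or p q)
| nd_orE : forall G p q r, nd G (Or p q) -> nd (p :: G) r -> nd (q :: G) r -> nd G r
| nd_allI : forall G p, nd (map flift G) p -> nd G (All p)
| nd_allE : forall G p t, nd G (All p) -> nd G (inst p t)
| nd_exI : forall G p t, nd G (inst p t) -> nd G (Ex p)
| nd_exE : forall G p q, nd G (Ex p) -> nd (p :: map flift G) (flift q) -> nd G q
| nd_refl : forall G t, nd G (Eq t t)
| nd_leib : forall G p s t, nd G (Eq s t) -> nd G (inst p s) -> nd G (inst p t).

Definition WSeq_proves (p : form) : Prop :=
  exists G, Forall WSeq_ax G /\ nd G p.

(* Main.v *)
Require Import Defs.
From Stdlib Require Import List Arith Lia.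
Import ListNotations.

Fixpoint mygo (acc : term) (l : list sq) : term :=
  match l with [] => acc | x :: r => mygo (Tsnoc acc (seqr x)) r end.
Lemma seqr_mk l : seqr (mk l) = mygo Te l. Proof. reflexivity. Qed.

Fixpoint sq_ind' (P : sq -> Prop) (f : forall l, Forall P l -> P (mk l)) (s : sq) : P s :=
  match s with
  | mk l => f l ((fix g (l : list sq) : Forall P l :=
                   match l with
                   | [] => Forall_nil _
                   | x :: r => Forall_cons _ (sq_ind' P f x) (g r)
                   end) l)
  end.

Lemma seqr_subst : forall s x, tsubst s (seqr x) = seqr x.
Proof.
  intros s x. induction x as [l Hl] using sq_ind'.
  rewrite seqr_mk. assert (H: tsubst s Te = Te) by reflexivity.
  revert H. generalize Te. induction Hl; intros acc Hacc; simpl; auto.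
  apply IHHl. simpl. rewrite Hacc, H. reflexivity.
Qed.

Lemma mygo_app acc l y : mygo acc (l ++ [y]) = Tsnoc (mygo acc l) (seqr y).
Proof. revert acc; induction l; simpl; auto. Qed.

Lemma seqr_snoc x y : seqr (sq_snoc x y) = Tsnoc (seqr x) (seqr y).
Proof. destruct x as [l]. simpl sq_snoc. rewrite !seqr_mk. apply mygo_app. Qed.

Lemma tsubst_comp : forall t s s', tsubst s (tsubst s' t) = tsubst (fun n => tsubst s (s' n)) t.
Proof. induction t; intros; simpl; f_equal; auto. Qed.

Lemma tsubst_ext : forall t s s', (forall n, s n = s' n) -> tsubst s t = tsubst s' t.
Proof. induction t; intros; simpl; f_equal; auto. Qed.

Lemma tsubst_id : forall t, tsubst Tvar t = t.
Proof. induction t; simpl; f_equal; auto. Qed.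

Lemma up_ext s s' : (forall n, s n = s' n) -> forall n, up s n = up s' n.
Proof. intros H [|n]; simpl; auto. rewrite H; auto. Qed.

Lemma fsubst_ext : forall p s s', (forall n, s n = s' n) -> fsubst s p = fsubst s' p.
Proof.
  induction p; intros; simpl; f_equal; auto using tsubst_ext, up_ext.
Qed.

Lemma up_comp s s' n : tsubst (up s) (up s' n) = up (fun n => tsubst s (s' n)) n.
Proof.
  destruct n; simpl; auto. unfold tlift. rewrite !tsubst_comp. apply tsubst_ext. intro; reflexivity.
Qed.

Lemma fsubst_comp : forall p s s', fsubst s (fsubst s' p) = fsubst (fun n => tsubst s (s' n)) p.
Proof.
  induction p; intros; simpl; f_equal; auto using tsubst_comp;
  rewrite IHp; apply fsubst_ext; apply up_comp.
Qed.

Lemma inst_lift_t u x : tsubst (scons u Tvar) (tlift x) = x.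
Proof. unfold tlift. rewrite tsubst_comp. simpl. apply tsubst_id. Qed.

Lemma tsubst_up_lift s x : tsubst (up s) (tlift x) = tlift (tsubst s x).
Proof. unfold tlift. rewrite !tsubst_comp. apply tsubst_ext. reflexivity. Qed.

Lemma fsubst_Sub s a b : fsubst s (Sub a b) = Sub (tsubst s a) (tsubst s b).
Proof. unfold Sub. simpl. rewrite !tsubst_up_lift. reflexivity. Qed.

Lemma fsubst_BAll s t a : fsubst s (BAll t a) = BAll (tsubst s t) (fsubst (up s) a).
Proof. unfold BAll. cbn [fsubst]. rewrite fsubst_Sub. rewrite tsubst_up_lift. reflexivity. Qed.

Lemma fsubst_bigOr s l : fsubst s (bigOr l) = bigOr (map (fsubst s) l).
Proof. induction l as [|x [|y r] IH]; simpl in *; auto. rewrite IH. auto. Qed.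

Lemma inst_up s a u : inst (fsubst (up s) a) u = fsubst (scons u s) a.
Proof.
  unfold inst. rewrite fsubst_comp. apply fsubst_ext. intros [|n]; simpl; auto.
  apply inst_lift_t.
Qed.

Lemma tclosed_subst : forall t n s, tclosed n t -> (forall k, k < n -> s k = Tvar k) -> tsubst s t = t.
Proof. induction t; simpl; intros; try f_equal; intuition eauto. Qed.

Lemma fclosed_subst : forall p n s, fclosed n p -> (forall k, k < n -> s k = Tvar k) -> fsubst s p = p.
Proof.
  induction p; simpl; intros; try f_equal; intuition eauto using tclosed_subst;
  (eapply IHp; [eassumption|]; intros [|k] Hk; simpl; auto;
   rewrite H0 by lia; reflexivity).
Qed.

Lemma teval_subst : forall t rho s, teval rho (tsubst s t) = teval (fun n => teval rho (s n)) t.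
Proof. induction t; intros; simpl; f_equal; auto. Qed.

Lemma teval_ext : forall t rho rho', (forall n, rho n = rho' n) -> teval rho t = teval rho' t.
Proof. induction t; intros; simpl; f_equal; auto. Qed.

Lemma teval_lift d rho x : teval (scons d rho) (tlift x) = teval rho x.
Proof. unfold tlift. rewrite teval_subst. reflexivity. Qed.

Lemma sat_Sub rho a b : sat rho (Sub a b) <-> exists d, sq_cat (teval rho a) d = teval rho b.
Proof. unfold Sub. cbn [sat teval]. split; intros [d H]; exists d; rewrite !teval_lift in *; auto. Qed.

Lemma flift_ax : forall p, WSeq_ax p -> forall s, fsubst s p = p.
Proof.
  intros p H s; destruct H.
  - unfold Neg; cbn [fsubst tsubst]; rewrite !seqr_subst; auto.
  - cbn [fsubst tsubst]; rewrite !seqr_subst; auto.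
  - cbn [fsubst]. rewrite fsubst_Sub. unfold tlift. rewrite !seqr_subst. change (tsubst (up s) (Tvar 0)) with (Tvar 0).
    rewrite fsubst_bigOr, map_map. f_equal. f_equal. f_equal.
    apply map_ext. intro. cbn [fsubst tsubst]. rewrite !seqr_subst. reflexivity.
Qed.

Lemma nd_weak : forall G p, nd G p -> forall G', incl G G' -> nd G' p.
Proof.
  intros G p H; induction H; intros G' Hi.
  - apply nd_ax; auto.
  - apply nd_raa. apply IHnd. apply incl_cons; [left; auto| intros x Hx; right; auto].
  - apply nd_impI. apply IHnd. apply incl_cons; [left; auto| intros x Hx; right; auto].
  - eapply nd_impE; eauto.
  - apply nd_andI; eauto.
  - eapply nd_andE1; eauto.
  - eapply nd_andE2; eauto.
  - apply nd_orI1; eauto.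
  - apply nd_orI2; eauto.
  - eapply nd_orE; [eauto| apply IHnd2 | apply IHnd3];
    (apply incl_cons; [left; auto| intros x Hx; right; auto]).
  - apply nd_allI. apply IHnd. apply incl_map. auto.
  - apply nd_allE; auto.
  - eapply nd_exI; eauto.
  - eapply nd_exE; [eauto|]. apply IHnd2. apply incl_cons; [left; auto|].
    intros x Hx; right. apply (incl_map flift Hi). auto.
  - apply nd_refl.
  - eapply nd_leib; eauto.
Qed.

Lemma nd_cons G q p : nd G p -> nd (q :: G) p.
Proof. intro H; eapply nd_weak; eauto. intros x Hx; right; auto. Qed.

Lemma nd_sym G s t : nd G (Eq s t) -> nd G (Eq t s).
Proof.
  intro H.
  assert (E: forall u, inst (Eq (Tvar 0) (tlift s)) u = Eq u s)
    by (intro; unfold inst; cbn [fsubst tsubst]; rewrite inst_lift_t; auto).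
  rewrite <- E. apply nd_leib with s; auto. rewrite E; apply nd_refl.
Qed.

Lemma nd_trans G s t u : nd G (Eq s t) -> nd G (Eq t u) -> nd G (Eq s u).
Proof.
  intros H1 H2.
  assert (E: forall v, inst (Eq (tlift s) (Tvar 0)) v = Eq s v)
    by (intro; unfold inst; cbn [fsubst tsubst]; rewrite inst_lift_t; auto).
  rewrite <- E. apply nd_leib with t; auto. rewrite E; auto.
Qed.

Lemma nd_congS G a A b B : nd G (Eq a A) -> nd G (Eq b B) -> nd G (Eq (Tsnoc a b) (Tsnoc A B)).
Proof.
  intros H1 H2.
  assert (E: forall v, inst (Eq (Tsnoc (tlift a) (tlift b)) (Tsnoc (Tvar 0) (tlift b))) v
                = Eq (Tsnoc a b) (Tsnoc v b))
    by (intro; unfold inst; cbn [fsubst tsubst]; rewrite !inst_lift_t; auto).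
  assert (E2: forall v, inst (Eq (Tsnoc (tlift a) (tlift b)) (Tsnoc (tlift A) (Tvar 0))) v
                = Eq (Tsnoc a b) (Tsnoc A v))
    by (intro; unfold inst; cbn [fsubst tsubst]; rewrite !inst_lift_t; auto).
  rewrite <- E2. apply nd_leib with b; auto. rewrite E2.
  rewrite <- E. apply nd_leib with a; auto. rewrite E; apply nd_refl.
Qed.

Lemma nd_congC G a A b B : nd G (Eq a A) -> nd G (Eq b B) -> nd G (Eq (Tcat a b) (Tcat A B)).
Proof.
  intros H1 H2.
  assert (E: forall v, inst (Eq (Tcat (tlift a) (tlift b)) (Tcat (Tvar 0) (tlift b))) v
                = Eq (Tcat a b) (Tcat v b))
    by (intro; unfold inst; cbn [fsubst tsubst]; rewrite !inst_lift_t; auto).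
  assert (E2: forall v, inst (Eq (Tcat (tlift a) (tlift b)) (Tcat (tlift A) (Tvar 0))) v
                = Eq (Tcat a b) (Tcat A v))
    by (intro; unfold inst; cbn [fsubst tsubst]; rewrite !inst_lift_t; auto).
  rewrite <- E2. apply nd_leib with b; auto. rewrite E2.
  rewrite <- E. apply nd_leib with a; auto. rewrite E; apply nd_refl.
Qed.

Lemma nd_bigOr : forall l G r, nd G (bigOr l) -> (forall q, In q l -> nd (q :: G) r) -> nd G r.
Proof.
  induction l as [|x l IH]; intros G r H Hq.
  - apply nd_raa. apply nd_cons. exact H.
  - destruct l as [|y l].
    + simpl in H. eapply nd_impE; [apply nd_impI; apply Hq; left; auto| exact H].
    + change (bigOr (x :: y :: l)) with (Or x (bigOr (y :: l))) in H.
      eapply nd_orE; [exact H| apply Hq; left; auto|].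
      apply IH; [apply nd_ax; left; auto|].
      intros q Hin. eapply nd_weak; [apply Hq; right; exact Hin|].
      intros z [Hz|Hz]; [left; auto| right; right; auto].
Qed.

Definition Pv p := exists G, Forall WSeq_ax G /\ nd G p.

Lemma Pv_ax p : WSeq_ax p -> Pv p.
Proof. intro H; exists [p]; split; auto. apply nd_ax; left; auto. Qed.

Lemma Pv_list : forall l, Forall Pv l -> exists G, Forall WSeq_ax G /\ Forall (nd G) l.
Proof.
  induction 1 as [|p l [G1 [A1 H1]] _ [G2 [A2 H2]]].
  - exists []; auto.
  - exists (G1 ++ G2); split; [apply Forall_app; auto|].
    constructor.
    + eapply nd_weak; eauto. apply incl_appl, incl_refl.
    + eapply Forall_impl; [|exact H2]. intros q Hq. eapply nd_weak; eauto. apply incl_appr, incl_refl.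
Qed.

Definition sg (rho : nat -> sq) : nat -> term := fun n => seqr (rho n).

Lemma term_eval : forall t rho, Pv (Eq (tsubst (sg rho) t) (seqr (teval rho t))).
Proof.
  induction t; intros rho.
  - exists []; split; auto. apply nd_refl.
  - exists []; split; auto. apply nd_refl.
  - destruct (Pv_list [_;_] (Forall_cons _ (IHt1 rho) (Forall_cons _ (IHt2 rho) (Forall_nil _))))
      as [G [A H]]. inversion H as [|? ? H1 H']; subst. inversion H' as [|? ? H2 _]; subst.
    exists G; split; auto. cbn [tsubst teval]. rewrite seqr_snoc. apply nd_congS; auto.
  - destruct (teval rho t1) as [l1] eqn:E1. destruct (teval rho t2) as [l2] eqn:E2.
    destruct (Pv_list [_;_;_] (Forall_cons _ (IHt1 rho) (Forall_cons _ (IHt2 rho)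
       (Forall_cons _ (Pv_ax _ (WSeq2 l1 l2)) (Forall_nil _)))))
      as [G [A H]]. inversion H as [|? ? H1 H']; subst. inversion H' as [|? ? H2 H'']; subst.
    inversion H'' as [|? ? H3 _]; subst. rewrite E1 in H1. rewrite E2 in H2.
    exists G; split; auto. cbn [tsubst teval]. rewrite E1, E2. simpl sq_cat.
    eapply nd_trans; [apply nd_congC; [exact H1|exact H2]| exact H3].
Qed.

Lemma in_inits {A : Type} (l i : list A) : In i (inits l) <-> exists r, i ++ r = l.
Proof.
  unfold inits. rewrite in_map_iff. split.
  - intros [k [<- _]]. exists (skipn k l). apply firstn_skipn.
  - intros [r <-]. exists (length i). split.
    + rewrite firstn_app, Nat.sub_diag, firstn_O, app_nil_r, firstn_all. auto.
    + apply in_seq. rewrite length_app. lia.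
Qed.

Lemma map_flift G : Forall WSeq_ax G -> map flift G = G.
Proof. induction 1; simpl; auto. rewrite IHForall. unfold flift. rewrite flift_ax; auto. Qed.

Lemma ax3_inst u lt :
  inst (Imp (Sub (Tvar 0) (tlift (seqr (mk lt))))
            (bigOr (map (fun i => Eq (Tvar 0) (tlift (seqr (mk i)))) (inits lt)))) u
  = Imp (Sub u (seqr (mk lt))) (bigOr (map (fun i => Eq u (seqr (mk i))) (inits lt))).
Proof.
  unfold inst. cbn [fsubst]. rewrite fsubst_Sub, fsubst_bigOr, map_map.
  unfold tlift. rewrite !seqr_subst. cbn [tsubst scons]. f_equal. f_equal.
  apply map_ext. intro. cbn [fsubst tsubst scons]. rewrite !seqr_subst. reflexivity.
Qed.

Lemma up_sg rho a : fsubst (up (sg rho)) a = fsubst (scons (Tvar 0) (sg rho)) a.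
Proof. apply fsubst_ext. intros [|n]; simpl; auto. unfold sg, tlift. apply seqr_subst. Qed.

Lemma sg_scons d rho a : fsubst (scons (seqr d) (sg rho)) a = fsubst (sg (scons d rho)) a.
Proof. apply fsubst_ext. intros [|n]; reflexivity. Qed.

Lemma leib' G p s t q : nd G (Eq s t) -> nd G (inst p s) -> q = inst p t -> nd G q.
Proof. intros H1 H2 ->. eapply nd_leib; eauto. Qed.

Lemma main : forall phi, Sigma phi -> forall rho, sat rho phi -> Pv (fsubst (sg rho) phi).
Proof.
  induction 1; intros rho Hs.
  -
    cbn [sat] in Hs.
    destruct (Pv_list [_;_] (Forall_cons _ (term_eval s rho) (Forall_cons _ (term_eval t rho) (Forall_nil _))))
      as [G [A HH]]. apply Forall_cons_iff in HH; destruct HH as [H1 H']. apply Forall_cons_iff in H'; destruct H' as [H2 _].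
    exists G; split; auto. cbn [fsubst]. rewrite Hs in H1.
    eapply nd_trans; [exact H1| apply nd_sym; exact H2].
  -
    cbn [sat Neg] in Hs.
    destruct (Pv_list [_;_;_] (Forall_cons _ (term_eval s rho) (Forall_cons _ (term_eval t rho)
       (Forall_cons _ (Pv_ax _ (WSeq1 _ _ Hs)) (Forall_nil _)))))
      as [G [A HH]]. apply Forall_cons_iff in HH; destruct HH as [H1 H']. apply Forall_cons_iff in H'; destruct H' as [H2 H''].
    apply Forall_cons_iff in H''; destruct H'' as [H3 _].
    exists G; split; auto. unfold Neg; cbn [fsubst]. apply nd_impI.
    eapply nd_impE; [apply nd_cons; exact H3|].
    eapply nd_trans; [apply nd_sym, nd_cons, H1|].
    eapply nd_trans; [apply nd_ax; left; reflexivity| apply nd_cons, H2].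
  -
    apply sat_Sub in Hs. destruct Hs as [[l2] Hd].
    destruct (teval rho s) as [l1] eqn:E1.
    destruct (Pv_list [_;_;_] (Forall_cons _ (term_eval s rho) (Forall_cons _ (term_eval t rho)
       (Forall_cons _ (Pv_ax _ (WSeq2 l1 l2)) (Forall_nil _)))))
      as [G [A HH]]. apply Forall_cons_iff in HH; destruct HH as [H1 H']. apply Forall_cons_iff in H'; destruct H' as [H2 H''].
    apply Forall_cons_iff in H''; destruct H'' as [H3 _].
    exists G; split; auto. rewrite fsubst_Sub. unfold Sub.
    apply nd_exI with (seqr (mk l2)). unfold inst; cbn [fsubst tsubst scons].
    rewrite !inst_lift_t. rewrite E1 in H1. rewrite <- Hd in H2. cbn [sq_cat] in H2.
    eapply nd_trans; [apply nd_congC; [exact H1| apply nd_refl]|].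
    eapply nd_trans; [exact H3| apply nd_sym; exact H2].
  -
    change (sat rho (Sub s t) -> False) in Hs.
    destruct (teval rho t) as [lt] eqn:Et.
    assert (HF : Forall Pv (map (fun i => Neg (Eq (seqr (teval rho s)) (seqr (mk i)))) (inits lt))).
    { apply Forall_forall. intros q Hq. apply in_map_iff in Hq. destruct Hq as [i [<- Hi]].
      apply Pv_ax. apply WSeq1. intro Heq. apply Hs. apply sat_Sub.
      apply in_inits in Hi. destruct Hi as [r Hr]. exists (mk r). rewrite Heq, Et.
      simpl. rewrite Hr. auto. }
    destruct (Pv_list (_ :: _ :: _ :: _) (Forall_cons _ (term_eval s rho) (Forall_cons _ (term_eval t rho)
       (Forall_cons _ (Pv_ax _ (WSeq3 lt)) HF))))
      as [G [A HH]]. apply Forall_cons_iff in HH; destruct HH as [H1 H']. apply Forall_cons_iff in H'; destruct H' as [H2 H''].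
    apply Forall_cons_iff in H''; destruct H'' as [H3 Hm]. rewrite Et in H2.
    rewrite Forall_forall in Hm.
    exists G; split; auto. unfold Neg; cbn [fsubst]. rewrite fsubst_Sub. apply nd_impI.
    set (s' := tsubst (sg rho) s). set (t' := tsubst (sg rho) t).
    assert (E: forall u, inst (Sub (tlift s') (Tvar 0)) u = Sub s' u).
    { intro u. unfold inst. rewrite fsubst_Sub. cbn [tsubst scons]. rewrite inst_lift_t. auto. }
    assert (HS : nd (Sub s' t' :: G) (Sub s' (seqr (mk lt)))).
    { apply (leib' _ (Sub (tlift s') (Tvar 0)) t' _ _ (nd_cons _ _ _ H2)); [rewrite E; apply nd_ax; left; auto| rewrite E; auto]. }
    assert (HO : nd (Sub s' t' :: G) (bigOr (map (fun i => Eq s' (seqr (mk i))) (inits lt)))).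
    { eapply nd_impE; [|exact HS]. rewrite <- ax3_inst. apply nd_allE. apply nd_cons, H3. }
    apply (nd_bigOr _ _ _ HO). intros q Hq. apply in_map_iff in Hq. destruct Hq as [i [<- Hi]].
    eapply nd_impE.
    + apply nd_cons, nd_cons. apply (Hm (Neg (Eq (seqr (teval rho s)) (seqr (mk i))))).
      apply in_map_iff. exists i; auto.
    + eapply nd_trans; [apply nd_sym, nd_cons, nd_cons, H1| apply nd_ax; left; auto].
  -
    destruct Hs as [Ha Hb].
    destruct (Pv_list [_;_] (Forall_cons _ (IHSigma1 rho Ha) (Forall_cons _ (IHSigma2 rho Hb) (Forall_nil _))))
      as [G [A HH]]. apply Forall_cons_iff in HH; destruct HH as [H1 H']. apply Forall_cons_iff in H'; destruct H' as [H2 _].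
    exists G; split; auto. cbn [fsubst]. apply nd_andI; auto.
  -
    destruct Hs as [Ha|Hb].
    + destruct (IHSigma1 rho Ha) as [G [A HH]]. exists G; split; auto. apply nd_orI1; auto.
    + destruct (IHSigma2 rho Hb) as [G [A HH]]. exists G; split; auto. apply nd_orI2; auto.
  -
    destruct Hs as [d Hd]. destruct (IHSigma _ Hd) as [G [A HH]].
    exists G; split; auto. cbn [fsubst]. apply nd_exI with (seqr d).
    rewrite inst_up, sg_scons. auto.
  -
    change (forall d, sat (scons d rho) (Sub (Tvar 0) (tlift t)) -> sat (scons d rho) a) in Hs.
    destruct (teval rho t) as [lt] eqn:Et.
    assert (HF : Forall Pv (map (fun i => fsubst (sg (scons (mk i) rho)) a) (inits lt))).
    { apply Forall_forall. intros q Hq. apply in_map_iff in Hq. destruct Hq as [i [<- Hi]].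
      apply IHSigma. apply Hs. apply sat_Sub.
      apply in_inits in Hi. destruct Hi as [r Hr]. exists (mk r). rewrite teval_lift, Et.
      simpl. rewrite Hr. auto. }
    destruct (Pv_list (_ :: _ :: _) (Forall_cons _ (term_eval t rho)
       (Forall_cons _ (Pv_ax _ (WSeq3 lt)) HF)))
      as [G [A HH]]. apply Forall_cons_iff in HH; destruct HH as [H2 H']. apply Forall_cons_iff in H'; destruct H' as [H3 Hm].
    rewrite Et in H2. rewrite Forall_forall in Hm.
    exists G; split; auto. rewrite fsubst_BAll. unfold BAll. apply nd_allI.
    rewrite (map_flift G A). apply nd_impI.
    set (t' := tsubst (sg rho) t).
    assert (Et' : tlift t' = t').
    { unfold t', tlift. rewrite tsubst_comp. apply tsubst_ext. intro; unfold sg; apply seqr_subst. }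
    rewrite Et'.
    assert (E: forall u, inst (Sub (Tvar 1) (Tvar 0)) u = Sub (Tvar 0) u).
    { intro u. unfold inst. rewrite fsubst_Sub. reflexivity. }
    assert (HS : nd (Sub (Tvar 0) t' :: G) (Sub (Tvar 0) (seqr (mk lt)))).
    { apply (leib' _ (Sub (Tvar 1) (Tvar 0)) t' _ _ (nd_cons _ _ _ H2)); [rewrite E; apply nd_ax; left; auto| rewrite E; auto]. }
    assert (HO : nd (Sub (Tvar 0) t' :: G) (bigOr (map (fun i => Eq (Tvar 0) (seqr (mk i))) (inits lt)))).
    { eapply nd_impE; [|exact HS]. rewrite <- ax3_inst. apply nd_allE. apply nd_cons, H3. }
    apply (nd_bigOr _ _ _ HO). intros q Hq. apply in_map_iff in Hq. destruct Hq as [i [<- Hi]].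
    assert (E1 : inst (fsubst (up (sg rho)) a) (Tvar 0) = fsubst (up (sg rho)) a).
    { rewrite inst_up, up_sg. auto. }
    apply (leib' _ (fsubst (up (sg rho)) a) (seqr (mk i)) (Tvar 0)); [| |rewrite E1; auto].
    + apply nd_sym, nd_ax; left; auto.
    + rewrite inst_up, sg_scons. apply nd_cons, nd_cons. apply Hm.
      apply in_map_iff. exists i; auto.
Qed.

Theorem theorem2 : forall phi : form,
  Sigma phi -> sentence phi -> models_S phi -> WSeq_proves phi.
Proof.
  intros phi HS Hsent Hm.
  destruct (main phi HS (fun _ => sq_nil) (Hm _)) as [G [A H]].
  exists G; split; auto.
  rewrite (fclosed_subst phi 0) in H; auto. intros; lia.
Qed.
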